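(* Let $m,n\ge4$, let $\omega$ be a weight order on $\mathbb{K}[y_S]$ and let $F$ be a Gröbner basis of $I_{P_n}$ with respect to $\omega$. If every element of $F$ is weakly $Q_{m,n}$-homogeneous with respect to $\omega$, then for every binomial in $F$ of the form $y_{\emptyset}y_{S_2}\cdots y_{S_k}-y_{T_1}y_{T_2}\cdots y_{T_k}$ with $T_i\neq\emptyset$ for all $i$, it holds that $y_{T_1}y_{T_2}\cdots y_{T_k}\le_\omega y_\emptyset y_{S_2}\cdots y_{S_k}$.
   Context: A DAG's v-structure is $i\to k\leftarrow j$ with $i,j$ non-adjacent; Markov equivalence classes of DAGs with a given skeleton are determined by their v-structures, and for an undirected graph $G$ the characteristic imset ideal $I_G$ is the kernel of the map sending the variable of a class to $\prod_{S:c(S)=1}t_S$, where $c(S)=1$ iff some $i\in S$ has $S\setminus\{i\}\subseteq\mathrm{pa}(i)$ in a DAG of the class. $P_n$ is the path $1-2-\cdots-n$; its classes are indexed by collider sets $S\subseteq\{2,\dots,n-1\}$ with no two consecutive integers, giving variables $y_S$. With $N=n+m-4$, $P'_m$ is the path $n-1,n,\dots,N,1,2$; its classes are indexed by sets $S'$ of interior vertices (among $n,\dots,N,1$) with no two consecutive along the path. $Q_{m,n}$ is the set of pairs $(S',S)$ of such collider sets with no two elements of $S'\cup S$ cyclically consecutive modulo $N$ and $S'\cup S\ne\emptyset$. A polynomial $f\in\mathbb{K}[y_S]$ homogeneous of degree $d$ with $\omega$-leading monomial $y_{S_1}\cdots y_{S_d}$ is weakly $Q_{m,n}$-homogeneous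 w.r.t. $\omega$ if for every monomial $y_{T_1}\cdots y_{T_d}$ of $f$ there is a permutation $\sigma$ of $[d]$ with $\{(S'_1,\dots,S'_d):(S'_\ell,S_\ell)\in Q_{m,n}\ \forall\ell\}\subseteq\{(S'_1,\dots,S'_d):(S'_\ell,T_{\sigma(\ell)})\in Q_{m,n}\ \forall\ell\}$. *)

(* Defs.v *)
From HB Require Import structures.
From mathcomp Require Import all_boot all_order all_algebra all_fingroup.
From mathcomp Require Import mpoly.

Set Implicit Arguments.
Unset Strict Implicit.
Unset Printing Implicit Defensive.

Import Order.TTheory GRing.Theory Num.Theory.
Local Open Scope ring_scope.

(* Vertices of the path P_n are 1, ..., n, encoded as the nonzero     *)
(* elements of 'I_n.+1 (the element 0 is a dummy, never a vertex).    *)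

(* A DAG with skeleton P_n : o j = true means the edge j - (j+1) is    *)
(* oriented j -> j+1, and false means j+1 -> j (1 <= j <= n-1).        *)
(* (Every orientation of a path is acyclic.)                           *)
Definition orientation (n : nat) := {ffun 'I_n.+1 -> bool}.

Definition par (n : nat) (o : orientation n) (j i : 'I_n.+1) : bool :=
  [&& (0 < j)%N, (0 < i)%N &
      (((j.+1 == i :> nat) && o j) || ((i.+1 == j :> nat) && ~~ o i))].

Definition adjP (n : nat) (a b : 'I_n.+1) : bool :=
  [&& (0 < a)%N, (0 < b)%N & (a.+1 == b :> nat) || (b.+1 == a :> nat)].

Definition collider (n : nat) (o : orientation n) (i : 'I_n.+1) : bool :=
  [exists j1, exists j2,
     [&& j1 != j2, par o j1 i, par o j2 i & ~~ adjP j1 j2]].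

Definition valid_coll (n : nat) (S : {set 'I_n.+1}) : bool :=
  [forall i in S, (2 <= i <= n.-1)%N] &&
  [forall i in S, forall j in S, (i.+1 != j :> nat)].

Definition cset (n : nat) := {S : {set 'I_n.+1} | @valid_coll n S}.

Lemma valid_coll0 n : @valid_coll n set0.
Proof. by apply/andP; split; apply/forallP => i; rewrite in_set0. Qed.

Definition cset0 (n : nat) : cset n := exist _ set0 (@valid_coll0 n).

(* The characteristic imset of the Markov equivalence class with collider
   set S:  c_S(T) = 1 iff T is a set of vertices and, in some DAG of the
   class (i.e. some orientation whose v-structures are exactly those
   centred at S), some i in T has T \ {i} included in pa(i). *)
Definition cimset (n : nat) (S : cset n) (T : {set 'I_n.+1}) : bool :=
  [forall i in T, (0 < i)%N] &&
  [exists o : orientation n,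
     [forall i : 'I_n.+1, (0 < i)%N ==> (collider o i == (i \in val S))] &&
     [exists i in T, [forall j in T, (j != i) ==> par o j i]]].

Definition nY (n : nat) := #|{: cset n}|.
Definition nT (n : nat) := #|{: {set 'I_n.+1}}|.

Definition imset_mono (K : fieldType) (n : nat) (S : cset n) : {mpoly K[nT n]} :=
  \prod_(T : {set 'I_n.+1} | cimset S T) 'X_(enum_rank T).

Definition I_P (K : fieldType) (n : nat) : pred {mpoly K[nY n]} :=
  fun g => mmap (fun c : K => c%:MP_[nT n]) (fun i : 'I_(nY n) => imset_mono K (enum_val i)) g == 0.

Definition ymono (n d : nat) (s : 'I_d -> cset n) : 'X_{1..nY n} :=
  (\sum_(l < d) U_(enum_rank (s l)))%MM.

Definition monomial_order (k : nat) (le : rel 'X_{1..k}) : Prop :=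
  [/\ total le, antisymmetric le, transitive le,
      (forall m, le 0%MM m) &
      (forall m1 m2 m, le m1 m2 -> le (m1 + m)%MM (m2 + m)%MM)].

Definition wdeg (R : realFieldType) (k : nat) (w : 'I_k -> R) (m : 'X_{1..k}) : R :=
  \sum_(i < k) w i * (m i)%:R.

Definition wle (R : realFieldType) (k : nat) (w : 'I_k -> R) (tau : rel 'X_{1..k})
  : rel 'X_{1..k} :=
  fun m1 m2 => (wdeg w m1 < wdeg w m2) || ((wdeg w m1 == wdeg w m2) && tau m1 m2).

Definition is_lead (K : fieldType) (k : nat) (le : rel 'X_{1..k})
  (f : {mpoly K[k]}) (m : 'X_{1..k}) : Prop :=
  m \in msupp f /\ forall m', m' \in msupp f -> le m' m.

Definition groebner_basis (K : fieldType) (k : nat) (le : rel 'X_{1..k})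
  (I : pred {mpoly K[k]}) (F : seq {mpoly K[k]}) : Prop :=
  (forall f, f \in F -> I f) /\
  (forall g, I g -> g != 0 ->
     exists2 f, f \in F &
       exists mf mg, [/\ is_lead le f mf, is_lead le g mg & (mf <= mg)%MM]).

(* The path P'_m : n-1, n, ..., N, 1, 2 with N = n + m - 4, on the     *)
(* vertices 1..N (as nonzero elements of 'I_N.+1).                     *)

Definition bigN (m n : nat) := (n + m - 4)%N.

Definition interiorP' (m n : nat) (i : nat) : bool :=
  ((n <= i <= bigN m n)%N) || (i == 1%N).

Definition consecP' (m n : nat) (a b : nat) : bool :=
  [|| (n.-1 <= a)%N && (a < bigN m n)%N && (b == a.+1),
      (a == bigN m n) && (b == 1%N) | (a == 1%N) && (b == 2%N)].

Definition valid_coll' (m n : nat) (S : {set 'I_(bigN m n).+1}) : bool :=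
  [forall i in S, interiorP' m n i] &&
  [forall i in S, forall j in S, ~~ consecP' m n i j].

Definition cset' (m n : nat) := {S : {set 'I_(bigN m n).+1} | @valid_coll' m n S}.

Definition Qmn (m n : nat) (S' : cset' m n) (S : cset n) : bool :=
  let U := [seq val x | x in val S'] ++ [seq val x | x in val S] in
  all (fun a : nat => all (fun b : nat =>
     (a.+1 %% bigN m n != b %% bigN m n)%N) U) U && (U != [::]).

(* weakly Q_{m,n}-homogeneous w.r.t. the order le (f = 0 accepted
   vacuously, as it has no leading monomial) *)
Definition weakly_Qhom (K : fieldType) (m n : nat) (le : rel 'X_{1..nY n})
  (f : {mpoly K[nY n]}) : Prop :=
  f = 0 \/
  exists d (s : 'I_d -> cset n),
    [/\ f \is d.-homog, is_lead le f (ymono s) &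
        forall t : 'I_d -> cset n, ymono t \in msupp f ->
          exists sigma : 'S_d,
            forall S' : 'I_d -> cset' m n,
              (forall l, Qmn (S' l) (s l)) ->
              (forall l, Qmn (S' l) (t (sigma l)))].

(* Main.v *)
Require Import Defs.
From HB Require Import structures.
From mathcomp Require Import all_boot all_order all_algebra all_fingroup.
From mathcomp Require Import mpoly zify.
Import Order.TTheory GRing.Theory Num.Theory.
Local Open Scope ring_scope.

Lemma ymono_pos n d (s : 'I_d -> cset n) l0 : (0 < ymono s (enum_rank (s l0)))%N.
Proof. by rewrite /ymono mnm_sumE (bigD1 l0) //= mnm1E eqxx. Qed.

Lemma ymono_zero n d (s : 'I_d -> cset n) S0 :
  (forall l, s l != S0) -> ymono s (enum_rank S0) = 0%N.
Proof.
move=> h; rewrite /ymono mnm_sumE big1 // => l _.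
by rewrite mnm1E (inj_eq (@enum_rank_inj _)) (negbTE (h l)).
Qed.

Lemma mdeg_ymono n d (s : 'I_d -> cset n) : mdeg (ymono s) = d.
Proof.
rewrite /ymono mdeg_sum (eq_bigr (fun _ => 1%N)) => [|l _]; last exact: mdeg1.
by rewrite sum_nat_const card_ord muln1.
Qed.

Lemma valid_coll'0 m n : @valid_coll' m n set0.
Proof. by apply/andP; split; apply/forallP => i; rewrite in_set0. Qed.

Definition cset'0 m n : cset' m n := exist _ set0 (@valid_coll'0 m n).

Lemma img0 (T : finType) (f : T -> nat) : [seq f x | x in (set0 : {set T})] = [::].
Proof. by apply/eqP; rewrite -size_eq0 /image_mem size_map -cardE cards0. Qed.

Lemma Qmn00 m n : Qmn (cset'0 m n) (cset0 n) = false.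
Proof. by rewrite /Qmn /= !img0. Qed.

Lemma Qmn0T m n (T : cset n) : (4 <= m)%N -> (4 <= n)%N -> T != cset0 n ->
  Qmn (cset'0 m n) T.
Proof.
move=> hm hn hT; rewrite /Qmn /= img0 /=.
case: T hT => T vT hT /=.
have /set0Pn [x0 hx0] : T != set0.
  by apply: contra hT => /eqP e; apply/eqP/val_inj; rewrite /= e.
apply/andP; split; last first.
  by apply/eqP => /(congr1 size); rewrite size_map -cardE => /eqP; rewrite cards_eq0 => /eqP e; rewrite e in_set0 in hx0.
have /andP [/forallP h1 /forallP h2] := vT.
apply/allP => a /mapP [x]; rewrite mem_enum => hx ->.
apply/allP => b /mapP [y]; rewrite mem_enum => hy ->.
have := h1 x; rewrite hx /= => /andP [hx1 hx2].
have := h1 y; rewrite hy /= => /andP [hy1 hy2].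
have := h2 x; rewrite hx /= => /forallP /(_ y); rewrite hy /= => hxy.
rewrite /bigN.
have hyN : (y < n + m - 4)%N by lia.
rewrite (modn_small hyN).
have [hlt|hge] := ltnP x.+1 (n + m - 4).
  by rewrite modn_small.
have -> : x.+1 = (n + m - 4)%N by lia.
rewrite modnn; apply/eqP; lia.
Qed.

Theorem lemma5p2 (K : fieldType) (R : realFieldType) (m n : nat)
  (hm : (4 <= m)%N) (hn : (4 <= n)%N)
  (w : 'I_(nY n) -> R) (tau : rel 'X_{1..nY n}) (htau : monomial_order tau)
  (F : seq {mpoly K[nY n]})
  (hGB : groebner_basis (wle w tau) (@I_P K n) F)
  (hQ : forall f, f \in F -> @weakly_Qhom K m n (wle w tau) f)
  (k : nat) (s t : 'I_k.+1 -> cset n)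
  (hs0 : s ord0 = cset0 n) (ht : forall l, t l != cset0 n)
  (hin : 'X_[ymono s] - 'X_[ymono t] \in F) :
  wle w tau (ymono t) (ymono s).
Proof.
have [e|hne] := eqVneq (ymono t) (ymono s).
  rewrite e /wle eqxx ltxx /=.
  by case: htau => tot _ _ _ _; have := tot (ymono s) (ymono s); rewrite orbb.
have hsupp mm : (mm \in msupp ('X_[ymono s] - 'X_[ymono t] : {mpoly K[nY n]}))
    = (mm == ymono s) || (mm == ymono t).
  rewrite mcoeff_msupp mcoeffB !mcoeffX.
  have [->|h1] := eqVneq mm (ymono s).
    by rewrite (negbTE hne) subr0 oner_eq0.
  rewrite /= sub0r oppr_eq0 [mm == _]eq_sym.
  by case: (_ == mm); rewrite ?oner_eq0 ?eqxx.
have hsS : ymono s \in msupp ('X_[ymono s] - 'X_[ymono t] : {mpoly K[nY n]}).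
  by rewrite hsupp eqxx.
have htS : ymono t \in msupp ('X_[ymono s] - 'X_[ymono t] : {mpoly K[nY n]}).
  by rewrite hsupp eqxx orbT.
have [hf0|[d [s' [hhom [hlin hlead] hperm]]]] := hQ _ hin.
  by move: hsS; rewrite hf0 msupp0.
move: (hlin); rewrite hsupp => /orP [] /eqP e.
  by rewrite -e; apply: hlead.
exfalso.
have hd : d = k.+1.
  by rewrite -(@mdeg_ymono _ _ s) (dhomog_mf hhom hsS) .
subst d.
have [sigma hsig] := hperm s hsS.
have nz l : s' l != cset0 n.
  apply/eqP => e0.
  have := @ymono_pos _ _ s' l; rewrite e0 e ymono_zero //.
have := hsig (fun _ => cset'0 m n) (fun l => @Qmn0T _ _ _ hm hn (nz l)) (sigma^-1 ord0)%g.
by rewrite permKV hs0 Qmn00.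
Qed.
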